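(* Under the setup in the context, assume in addition that $H_j$ is nonsingular and that the block GMRES residual $F_{j-1}^{(G)}$ has rank $L$ (so $\tilde C_j$ is nonsingular). Let $Q_j^{(11)}=\mathcal U_1\mathcal C\mathcal V_1^*$ and $Q_j^{(21)}=\mathcal U_2\mathcal S\mathcal V_1^*$ be a CS decomposition of the first block column of $\Omega_j$, with $\mathcal U_1,\mathcal U_2,\mathcal V_1\in\mathbb C^{L\times L}$ unitary and $\mathcal C=\mathrm{diag}(c_1,\dots,c_L)$, $\mathcal S=\mathrm{diag}(s_1,\dots,s_L)$ real, nonnegative, with $c_i^2+s_i^2=1$. Then $$X_j^{(G)}=X_j^{(F)}\bigl(\tilde C_j^{-1}\mathcal V_1\mathcal C^2\mathcal V_1^*\tilde C_j\bigr)+X_{j-1}^{(G)}\bigl(\tilde C_j^{-1}\mathcal V_1\mathcal S^2\mathcal V_1^*\tilde C_j\bigr),$$ where the two bracketed matrices sum to $I_L$ and $\tilde C_j^{-1}\mathcal V_1\mathcal C^2\mathcal V_1^*\tilde C_j=\tilde C_j^{-1}(Q_j^{(11)})^*Q_j^{(11)}\tilde C_j$.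
   Context: Let $n,L\ge1$, $A\in\mathbb C^{n\times n}$, $B,X_0\in\mathbb C^{n\times L}$, $F_0=B-AX_0$, and let $F_0=V_1S_0$ be a reduced QR factorization ($V_1\in\mathbb C^{n\times L}$ with orthonormal columns, $S_0\in\mathbb C^{L\times L}$ upper triangular). Fix $j\ge2$. The block Arnoldi process (possibly with dependent basis vectors replaced by new orthonormal vectors) yields $W_k=[V_1,\dots,V_k]\in\mathbb C^{n\times kL}$ ($k\le j+1$) with orthonormal columns, $V_i\in\mathbb C^{n\times L}$, and the block Arnoldi relation $AW_j=W_{j+1}\bar H_j$, where $\bar H_j=(H_{ik})\in\mathbb C^{(j+1)L\times jL}$ has $L\times L$ blocks $H_{ik}$, is block upper Hessenberg ($H_{ik}=0$ for $i>k+1$), and each $H_{k+1,k}$ is upper triangular. For $k\le j$, $\bar H_k$ denotes the leading $(k+1)L\times kL$ submatrix of $\bar H_j$ and $H_k$ the leading $kL\times kL$ submatrix. $E^{[m]}\in\mathbb R^{mL\times L}$ denotes the first $L$ columns of $I_{mL}$. For $k\ge1$ with $\bar H_k$ of full column rank, the block GMRES iterate is $X_k^{(G)}=X_0+W_kY_k^{(G)}$, where $Y_k^{(G)}\in\mathbb C^{kL\times L}$ is the unique minimizer of $\|\bar H_kY-E^{[k+1]}S_0\|_F$ (Frobenius norm), and $F_k^{(G)}=B-AX_k^{(G)}$. If $H_k$ is nonsingular, the block FOM iterate is $X_k^{(F)}=X_0+W_kH_k^{-1}E^{[k]}S_0$. Block QR factorization: assume $\bar H_j$ has full column rank. There are unitary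 matrices $\Omega_i=\begin{bmatrix}Q_i^{(11)}&Q_i^{(12)}\\Q_i^{(21)}&Q_i^{(22)}\end{bmatrix}\in\mathbb C^{2L\times 2L}$ ($i=1,\dots,j$, all four blocks $L\times L$); for $m\ge i+1$ put $Q_i^{(m)}=\mathrm{diag}(I_{(i-1)L},\Omega_i,I_{(m-i-1)L})\in\mathbb C^{mL\times mL}$ and $\bar Q_k=Q_k^{(k+1)}Q_{k-1}^{(k+1)}\cdots Q_1^{(k+1)}$. The $\Omega_i$ are chosen recursively so that $\bar Q_k\bar H_k=\begin{bmatrix}R_k\\ 0_{L\times kL}\end{bmatrix}$ with $R_k\in\mathbb C^{kL\times kL}$ upper triangular and nonsingular ($k=1,\dots,j$). In particular $Q_{j-1}^{(j+1)}\cdots Q_1^{(j+1)}\bar H_j=\begin{bmatrix}R_{j-1}&Z_j\\0&\hat H_{jj}\\0&H_{j+1,j}\end{bmatrix}$ for some $Z_j\in\mathbb C^{(j-1)L\times L}$, $\hat H_{jj}\in\mathbb C^{L\times L}$; and $\Omega_j\begin{bmatrix}\hat H_{jj}\\H_{j+1,j}\end{bmatrix}=\begin{bmatrix}N_j\\0\end{bmatrix}$ with $N_j$ upper triangular and nonsingular. Write $\bar Q_{j-1}E^{[j]}S_0=\begin{bmatrix}G_{j-1}\\\tilde C_j\end{bmatrix}$ with $G_{j-1}\in\mathbb C^{(j-1)L\times L}$, $\tilde C_j\in\mathbb C^{L\times L}$. *)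

(* Defs.v *)
(* Complex scalars: an arbitrary numClosedFieldType C
   (e.g. algC), with conjugation Num.conj (notation x^* ). *)
From HB Require Import structures.
From mathcomp Require Import all_boot all_order all_algebra.
Set Implicit Arguments. Unset Strict Implicit. Unset Printing Implicit Defensive.
Import Order.TTheory GRing.Theory Num.Theory.
Local Open Scope ring_scope.

Section Defs.
Variable C : numClosedFieldType.

Definition ctmx m n (A : 'M[C]_(m, n)) : 'M[C]_(n, m) := (map_mx Num.conj A)^T.

(* entry of M at nat indices (i, k) (0-based), 0 when out of range *)
Definition nth_mx m n (M : 'M[C]_(m, n)) (i k : nat) : C :=
  match @insub nat (fun x => x < m)%N _ i, @insub nat (fun x => x < n)%N _ k with
  | Some i', Some k' => M i' k'
  | _, _ => 0
  end.

Definition lead_mx m n p q (M : 'M[C]_(m, n)) : 'M[C]_(p, q) :=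
  \matrix_(i < p, k < q) nth_mx M i k.

Definition upper_tri m (M : 'M[C]_m) : Prop :=
  forall a b : 'I_m, (b < a)%N -> M a b = 0.

Definition orthonormal_cols m n (M : 'M[C]_(m, n)) : Prop :=
  ctmx M *m M = 1%:M.

Definition frob m n (M : 'M[C]_(m, n)) : C :=
  sqrtC (\sum_(i < m) \sum_(k < n) `|M i k| ^+ 2).

(* L x L block (i,k) (1-based block indices) of M *)
Definition blk (L : nat) m n (M : 'M[C]_(m, n)) (i k : nat) : 'M[C]_L :=
  \matrix_(a < L, b < L) nth_mx M ((i.-1) * L + a) ((k.-1) * L + b).

Definition Emx (L m : nat) : 'M[C]_(m * L, L) :=
  \matrix_(r < m * L, c < L) ((r : nat) == c)%:R.

(* Q_i^{(m)} = diag(I_{(i-1)L}, Omega_i, I_{(m-i-1)L}) *)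
Definition Qm (L : nat) (Omega : nat -> 'M[C]_(L + L)) (m i : nat) : 'M[C]_(m * L) :=
  \matrix_(r < m * L, c < m * L)
    if [&& (i.-1) * L <= r, r < i.+1 * L, (i.-1) * L <= c & c < i.+1 * L]%N
    then nth_mx (Omega i) (r - (i.-1) * L) (c - (i.-1) * L)
    else ((r : nat) == c)%:R.

(* Qbar_k = Q_k^{(k+1)} ... Q_1^{(k+1)} *)
Definition Qbar (L : nat) (Omega : nat -> 'M[C]_(L + L)) (k : nat) : 'M[C]_(k.+1 * L) :=
  foldr (fun i acc => acc *m Qm Omega k.+1 i) 1%:M (iota 1 k).

End Defs.

(* Main.v *)
Require Import Defs.
From HB Require Import structures.
From mathcomp Require Import all_boot all_order all_algebra.
From mathcomp Require Import zify ring lra.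
Import Order.TTheory GRing.Theory Num.Theory.
Set Implicit Arguments. Unset Strict Implicit. Unset Printing Implicit Defensive.
Local Open Scope ring_scope.

Section Help.
Variable C : numClosedFieldType.

Lemma nmP m n (M : 'M[C]_(m,n)) r c (hr : (r < m)%N) (hc : (c < n)%N) :
  nth_mx M r c = M (Ordinal hr) (Ordinal hc).
Proof.
rewrite /nth_mx; case: insubP => [i' _ hi|]; last by rewrite hr.
case: insubP => [k' _ hk|]; last by rewrite hc.
have -> : i' = Ordinal hr by apply: val_inj.
have -> : k' = Ordinal hc by apply: val_inj.
by [].
Qed.

Lemma nmE m n (M : 'M[C]_(m,n)) (i : 'I_m) (k : 'I_n) : nth_mx M i k = M i k.
Proof.
rewrite (nmP M (ltn_ord i) (ltn_ord k)).
have -> : Ordinal (ltn_ord i) = i by apply: val_inj.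
have -> : Ordinal (ltn_ord k) = k by apply: val_inj.
by [].
Qed.

Lemma nm_out m n (M : 'M[C]_(m,n)) r c :
  ~~ ((r < m) && (c < n))%N -> nth_mx M r c = 0.
Proof.
rewrite /nth_mx; case: insubP => [i' hi _|//]; case: insubP => [k' hk _|//].
by rewrite hi hk.
Qed.

Lemma mx_nmP m n (A B : 'M[C]_(m,n)) :
  (forall r c, (r < m)%N -> (c < n)%N -> nth_mx A r c = nth_mx B r c) -> A = B.
Proof. by move=> H; apply/matrixP=> i k; rewrite -!nmE; apply: H. Qed.

Lemma nm_matrix m n (F : nat -> nat -> C) r c :
  nth_mx (\matrix_(i < m, k < n) F i k) r c =
  if ((r < m) && (c < n))%N then F r c else 0.
Proof.
case: (boolP ((r < m) && (c < n))%N) => [/andP[hr hc]|h]; last by rewrite nm_out.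
by rewrite (nmP _ hr hc) mxE.
Qed.

Lemma nm_mul m n p (A : 'M[C]_(m,n)) (B : 'M[C]_(n,p)) r c :
  nth_mx (A *m B) r c = \sum_(t < n) nth_mx A r t * nth_mx B t c.
Proof.
case: (boolP ((r < m) && (c < p))%N) => [/andP[hr hc]|h].
  rewrite (nmP _ hr hc) mxE; apply: eq_bigr => t _; by rewrite -!nmE.
rewrite nm_out // big1 // => t _; case/nandP: h => h.
  by rewrite (nm_out A) ?mul0r // (negbTE h).
by rewrite (nm_out B) ?mulr0 // (negbTE h) andbF.
Qed.

Lemma nm_add m n (A B : 'M[C]_(m,n)) r c :
  nth_mx (A + B) r c = nth_mx A r c + nth_mx B r c.
Proof.
case: (boolP ((r < m) && (c < n))%N) => [/andP[hr hc]|h].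
  by rewrite !(nmP _ hr hc) mxE.
by rewrite !nm_out // addr0.
Qed.

Lemma nm_opp m n (A : 'M[C]_(m,n)) r c : nth_mx (- A) r c = - nth_mx A r c.
Proof.
case: (boolP ((r < m) && (c < n))%N) => [/andP[hr hc]|h].
  by rewrite !(nmP _ hr hc) mxE.
by rewrite !nm_out // oppr0.
Qed.

Lemma nm_sub m n (A B : 'M[C]_(m,n)) r c :
  nth_mx (A - B) r c = nth_mx A r c - nth_mx B r c.
Proof. by rewrite nm_add nm_opp. Qed.

Lemma nm_ct m n (A : 'M[C]_(m,n)) r c : nth_mx (ctmx A) r c = (nth_mx A c r)^*.
Proof.
case: (boolP ((r < n) && (c < m))%N) => [/andP[hr hc]|h].
  by rewrite (nmP _ hr hc) (nmP _ hc hr) !mxE.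
rewrite !nm_out ?conjC0 //; by rewrite andbC.
Qed.

Lemma nm1 n r c : nth_mx (1%:M : 'M[C]_n) r c = ((r == c) && (r < n)%N)%:R.
Proof.
case: (boolP ((r < n) && (c < n))%N) => [/andP[hr hc]|h].
  by rewrite (nmP _ hr hc) mxE hr andbT.
rewrite nm_out //; case: eqP h => // ->; by rewrite andbb => /negbTE ->.
Qed.

Lemma nm_lead m n p q (M : 'M[C]_(m,n)) r c :
  nth_mx (lead_mx p q M) r c = if ((r < p) && (c < q))%N then nth_mx M r c else 0.
Proof.
case: (boolP ((r < p) && (c < q))%N) => [/andP[hr hc]|h]; last by rewrite nm_out.
by rewrite (nmP _ hr hc) mxE.
Qed.


Lemma sum_pick q r (F : nat -> C) :
  \sum_(t < q) (((t : nat) == r)%:R * F t) = if (r < q)%N then F r else 0.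
Proof.
case: ltnP => h.
  rewrite (bigD1 (Ordinal h)) //= eqxx mul1r big1 ?addr0 // => t ht.
  rewrite (_ : ((t : nat) == r) = false) ?mul0r //.
  apply/negbTE; apply: contra ht => /eqP e; apply/eqP/val_inj => //.
rewrite big1 // => t _.
have /negbTE -> : (t : nat) != r by rewrite neq_ltn (leq_trans (ltn_ord t) h).
by rewrite mul0r.
Qed.

Lemma sum_pickr q r (F : nat -> C) :
  \sum_(t < q) (F t * ((t : nat) == r)%:R) = if (r < q)%N then F r else 0.
Proof. by rewrite -sum_pick; apply: eq_bigr => t _; rewrite mulrC. Qed.

Lemma sum_block o p q (F : nat -> C) : (o + p <= q)%N ->
  \sum_(t < q) (if (o <= t < o + p)%N then F t else 0) = \sum_(u < p) F (o + u)%N.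
Proof.
move=> h.
rewrite -(big_mkord xpredT (fun t => if (o <= t < o + p)%N then F t else 0)).
rewrite (@big_cat_nat _ _ _ o 0 q) //=; last by lia.
rewrite (@big_cat_nat _ _ _ (o + p) o q) ?leq_addr //=.
have -> : \sum_(0 <= i < o) (if (o <= i < o + p)%N then F i else 0) = 0.
  rewrite big_nat_cond big1 // => t /andP[/andP[_ ht] _].
  by rewrite leqNgt ht.
have -> : \sum_(o + p <= i < q) (if (o <= i < o + p)%N then F i else 0) = 0.
  rewrite big_nat_cond big1 // => t /andP[/andP[ht _] _].
  by rewrite ltnNge ht andbF.
rewrite add0r addr0 (eq_big_nat _ _ (F2 := F)); last by move=> t ->.
rewrite -{1}(add0n o) big_addn addKn big_mkord.
by apply: eq_bigr => t _; rewrite addnC.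
Qed.

Definition emb o q p (P : 'M[C]_p) : 'M[C]_q :=
  \matrix_(r < q, c < q)
    if ((o <= r < o + p) && (o <= c < o + p))%N then nth_mx P (r - o) (c - o)
    else ((r : nat) == c)%:R.

Lemma nm_emb o q p (P : 'M[C]_p) r c :
  nth_mx (emb o q P) r c =
  if ((r < q) && (c < q))%N then
    (if ((o <= r < o + p) && (o <= c < o + p))%N then nth_mx P (r - o) (c - o)
     else (r == c)%:R) else 0.
Proof.
case: (boolP ((r < q) && (c < q))%N) => [/andP[hr hc]|h]; last by rewrite nm_out.
by rewrite (nmP _ hr hc) mxE.
Qed.

Lemma emb_mul o q p (P P' : 'M[C]_p) : (o + p <= q)%N ->
  emb o q P *m emb o q P' = emb o q (P *m P').
Proof.
move=> hq; apply: mx_nmP => r c hr hc.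
rewrite nm_mul !nm_emb hr hc /=.
under eq_bigr => t _ do rewrite !nm_emb hr hc ltn_ord /=.
case Hr: (o <= r < o + p)%N; case Hc: (o <= c < o + p)%N => /=.
- rewrite nm_mul.
  transitivity (\sum_(t < q) (if (o <= t < o + p)%N then
     nth_mx P (r - o) (t - o) * nth_mx P' (t - o) (c - o) else 0)); last first.
    rewrite (sum_block (fun t => nth_mx P (r - o) (t - o) * nth_mx P' (t - o) (c - o)) hq).
    by apply: eq_bigr => u _; rewrite addKn.
  apply: eq_bigr => t _; case: ifP => ht //.
  case: eqP => [e|_]; last by rewrite mul0r.
  by rewrite -e Hr in ht.
- under eq_bigr => t _ do rewrite andbF.
  rewrite (sum_pickr q c (fun t => if (o <= t < o + p)%N then
      nth_mx P (r - o) (t - o) else (r == t)%:R)) hc /=.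
  by case: ifP => // ht; move: Hc; rewrite ht.
- rewrite (bigD1 (Ordinal hr)) //= big1 ?addr0.
    by rewrite eqxx mul1r Hr.
  move=> t ht; rewrite (_ : (r == t) = false) ?mul0r //.
  apply/negbTE; apply: contra ht => /eqP e; apply/eqP; exact: val_inj.
- rewrite (bigD1 (Ordinal hr)) //= big1 ?addr0.
    by rewrite eqxx mul1r Hr.
  move=> t ht; rewrite (_ : (r == t) = false) ?mul0r //.
  apply/negbTE; apply: contra ht => /eqP e; apply/eqP; exact: val_inj.
Qed.


Lemma ctmx_mul m n p (A : 'M[C]_(m,n)) (B : 'M[C]_(n,p)) :
  ctmx (A *m B) = ctmx B *m ctmx A.
Proof. by rewrite /ctmx map_mxM trmx_mul. Qed.

Lemma ctmxK m n (A : 'M[C]_(m,n)) : ctmx (ctmx A) = A.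
Proof. by apply/matrixP => i k; rewrite !mxE conjCK. Qed.

Lemma ctmxD m n (A B : 'M[C]_(m,n)) : ctmx (A + B) = ctmx A + ctmx B.
Proof. by apply/matrixP => i k; rewrite !mxE rmorphD. Qed.

Lemma ctmx1 n : ctmx (1%:M : 'M[C]_n) = 1%:M.
Proof. by apply/matrixP => i k; rewrite !mxE eq_sym rmorph_nat. Qed.

Lemma emb_ct o q p (P : 'M[C]_p) : ctmx (emb o q P) = emb o q (ctmx P).
Proof.
apply: mx_nmP => r c hr hc.
rewrite nm_ct !nm_emb hr hc /= andbC nm_ct; case: ifP => _ //.
by rewrite eq_sym conjC_nat.
Qed.

Lemma emb_1 o q p : emb o q (1%:M : 'M[C]_p) = 1%:M.
Proof.
apply: mx_nmP => r c hr hc.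
rewrite nm_emb !nm1 hr hc /=; case: ifP => [/andP[/andP[h1 h2] /andP[h3 h4]]|_]; last by rewrite andbT.
have -> : (r - o < p)%N by lia.
have -> : (r - o == c - o)%N = (r == c) by apply/idP/idP => /eqP h; apply/eqP; lia.
by rewrite andbT.
Qed.

Lemma emb_unitary o q p (P : 'M[C]_p) : (o + p <= q)%N ->
  ctmx P *m P = 1%:M -> ctmx (emb o q P) *m emb o q P = 1%:M.
Proof. by move=> h HP; rewrite emb_ct emb_mul // HP emb_1. Qed.

Lemma emb_nest o q1 q2 p (P : 'M[C]_p) : (o + p <= q1)%N -> (q1 <= q2)%N ->
  emb o q2 P = emb 0 q2 (emb o q1 P).
Proof.
move=> h1 h2; apply: mx_nmP => r c hr hc.
rewrite !nm_emb hr hc /= !subn0 !add0n.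
case: ifP => H.
  have [hr1 hc1] : (r < q1)%N /\ (c < q1)%N by move: H => /andP[/andP[_ ?] /andP[_ ?]]; lia.
  by rewrite hr1 hc1.
by case: ifP => // ->.
Qed.

Definition fs m n (X : 'M[C]_(m,n)) := \sum_(i < m) \sum_(k < n) `|X i k| ^+ 2.

Lemma frobE m n (X : 'M[C]_(m,n)) : frob X = sqrtC (fs X).
Proof. by []. Qed.

Lemma fs_ge0 m n (X : 'M[C]_(m,n)) : 0 <= fs X.
Proof. by apply: sumr_ge0 => i _; apply: sumr_ge0 => k _; apply: exprn_ge0. Qed.

Lemma fs_tr m n (X : 'M[C]_(m,n)) : fs X = \tr (ctmx X *m X).
Proof.
rewrite /fs /mxtrace exchange_big; apply: eq_bigr => k _; rewrite mxE.
by apply: eq_bigr => i _; rewrite !mxE normCKC.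
Qed.

Lemma fs_unitary m n (Q : 'M[C]_m) (X : 'M[C]_(m,n)) :
  ctmx Q *m Q = 1%:M -> fs (Q *m X) = fs X.
Proof. by move=> HQ; rewrite !fs_tr ctmx_mul mulmxA -(mulmxA (ctmx X)) HQ mulmx1. Qed.

Lemma fs_nm m n (X : 'M[C]_(m,n)) :
  fs X = \sum_(i < m) \sum_(k < n) `|nth_mx X i k| ^+ 2.
Proof. by apply: eq_bigr => i _; apply: eq_bigr => k _; rewrite nmE. Qed.

Lemma ls_top p q l (Q : 'M[C]_p) (H : 'M[C]_(p,q)) (b : 'M[C]_(p,l))
    (R : 'M[C]_q) (Y : 'M[C]_(q,l)) :
  (q <= p)%N -> ctmx Q *m Q = 1%:M ->
  (forall r c, nth_mx (Q *m H) r c = if (r < q)%N then nth_mx R r c else 0) ->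
  R \in unitmx ->
  (forall Y', frob (H *m Y - b) <= frob (H *m Y' - b)) ->
  forall r c, (r < q)%N -> nth_mx (R *m Y) r c = nth_mx (Q *m b) r c.
Proof.
move=> hqp HQ HQH HR Hmin.
pose Ys := invmx R *m lead_mx q l (Q *m b).
have key : forall Y', fs (H *m Y' - b) = \sum_(i < p) \sum_(k < l)
   `|(if (i < q)%N then nth_mx (R *m Y') i k else 0) - nth_mx (Q *m b) i k| ^+ 2.
  move=> Y'; rewrite -(fs_unitary _ HQ) mulmxBr mulmxA fs_nm.
  apply: eq_bigr => i _; apply: eq_bigr => k _.
  rewrite nm_sub (nm_mul (Q *m H)); congr (`|_ - _| ^+ 2).
  under eq_bigr => t _ do rewrite HQH.
  case: ifP => hi; first by rewrite nm_mul.
  by rewrite big1 // => t _; rewrite mul0r.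
have hYs : forall i k, (i < q)%N -> nth_mx (R *m Ys) i k = nth_mx (Q *m b) i k.
  move=> i k hi; rewrite /Ys mulmxA mulmxV // mul1mx nm_lead hi /=.
  by case: (ltnP k l) => hk //; rewrite nm_out //; apply/nandP; right; rewrite -leqNgt.
have := Hmin Ys; rewrite !frobE ler_sqrtC ?nnegrE ?fs_ge0 // !key.
set S := \sum_(i < p) (if (i < q)%N then
           \sum_(k < l) `|nth_mx (R *m Y) i k - nth_mx (Q *m b) i k| ^+ 2 else 0).
have -> : \sum_(i < p) \sum_(k < l) `|(if (i < q)%N then nth_mx (R *m Y) i k else 0)
            - nth_mx (Q *m b) i k| ^+ 2 =
          \sum_(i < p) \sum_(k < l) `|(if (i < q)%N then nth_mx (R *m Ys) i k else 0)
            - nth_mx (Q *m b) i k| ^+ 2 + S.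
  rewrite -big_split; apply: eq_bigr => i _ /=; case: ifP => hi; last by rewrite addr0.
  have -> : \sum_(k < l) `|nth_mx (R *m Ys) i k - nth_mx (Q *m b) i k| ^+ 2 = 0.
    by apply: big1 => k _; rewrite hYs // subrr normr0 expr0n.
  by rewrite add0r.
rewrite gerDl => HS.
have S0 : S = 0.
  apply/eqP; rewrite eq_le HS /=; apply: sumr_ge0 => i _; case: ifP => // _.
  by apply: sumr_ge0 => k _; apply: exprn_ge0.
have Sge : forall i : 'I_p, true -> 0 <= (if (i < q)%N then
           \sum_(k < l) `|nth_mx (R *m Y) i k - nth_mx (Q *m b) i k| ^+ 2 else 0).
  move=> i _; case: ifP => // _; by apply: sumr_ge0 => k _; apply: exprn_ge0.
move=> r c hr.
have hrp : (r < p)%N by apply: leq_trans hqp.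
have := @psumr_eq0P _ _ _ _ Sge S0 (Ordinal hrp) isT; rewrite /= hr => Hk.
case: (ltnP c l) => hc; last by rewrite !nm_out //; apply/nandP; right; rewrite -leqNgt.
have Hk2 : forall k : 'I_l, true -> 0 <= `|nth_mx (R *m Y) r k - nth_mx (Q *m b) r k| ^+ 2.
  by move=> k _; apply: exprn_ge0.
have := @psumr_eq0P _ _ _ _ Hk2 Hk (Ordinal hc) isT => /= /eqP.
by rewrite expf_eq0 /= normr_eq0 subr_eq0 => /eqP.
Qed.


Lemma sum_trunc p q (F : nat -> C) : (p <= q)%N ->
  \sum_(t < q) (if (t < p)%N then F t else 0) = \sum_(u < p) F u.
Proof.
move=> h; rewrite -(@sum_block 0 p q F) ?add0n //.
Qed.

Lemma nm_lead_row m n p (X : 'M[C]_(m,n)) r c : (r < p)%N ->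
  nth_mx (lead_mx p n X) r c = nth_mx X r c.
Proof.
move=> hr; rewrite nm_lead hr /=; case: ifP => // hc.
by rewrite nm_out // hc andbF.
Qed.

Lemma nm_Emx L m r c :
  nth_mx (Emx C L m) r c = if ((r < m * L) && (c < L))%N then (r == c)%:R else 0.
Proof.
case: (boolP ((r < m * L) && (c < L))%N) => [/andP[hr hc]|h]; last by rewrite nm_out.
by rewrite (nmP _ hr hc) mxE.
Qed.

Lemma lead_lead m n p q p' q' (M : 'M[C]_(m,n)) : (p <= p')%N -> (q <= q')%N ->
  lead_mx p q (lead_mx p' q' M) = lead_mx p q M.
Proof.
move=> h1 h2; apply: mx_nmP => r c hr hc.
rewrite !nm_lead hr hc /= (leq_trans hr h1) (leq_trans hc h2) //.
Qed.

Lemma lead_id m n (M : 'M[C]_(m,n)) : lead_mx m n M = M.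
Proof. by apply: mx_nmP => r c hr hc; rewrite nm_lead hr hc. Qed.

Lemma lead_sub m n p q (A B : 'M[C]_(m,n)) :
  lead_mx p q (A - B) = lead_mx p q A - lead_mx p q B.
Proof.
apply: mx_nmP => r c hr hc; rewrite nm_sub !nm_lead hr hc /=.
by rewrite nm_sub.
Qed.

Lemma lead_mulr m n l p (A : 'M[C]_(m,n)) (Y : 'M[C]_(n,l)) :
  lead_mx p l (A *m Y) = lead_mx p n A *m Y.
Proof.
apply: mx_nmP => r c hr hc; rewrite nm_lead_row // !nm_mul.
by apply: eq_bigr => t _; rewrite nm_lead_row.
Qed.

Lemma pad_mul a b p l (A : 'M[C]_(a,b)) (Y : 'M[C]_(p,l)) : (p <= b)%N ->
  A *m lead_mx b l Y = lead_mx a p A *m Y.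
Proof.
move=> hpb; apply: mx_nmP => r c hr hc; rewrite !nm_mul.
transitivity (\sum_(t < b) (if (t < p)%N then nth_mx A r t * nth_mx Y t c else 0)).
  apply: eq_bigr => t _; rewrite nm_lead_row //; case: ifP => // ht.
  by rewrite (nm_out Y) ?mulr0 // ht.
rewrite (sum_trunc (fun t => nth_mx A r t * nth_mx Y t c)) //.
by apply: eq_bigr => t _; rewrite nm_lead hr ltn_ord.
Qed.

Lemma EmxS L m l (S : 'M[C]_(L, l)) : Emx C L m *m S = lead_mx (m * L) l S.
Proof.
apply: mx_nmP => r c hr hc; rewrite nm_mul nm_lead hr hc /=.
under eq_bigr => t _ do rewrite nm_Emx hr ltn_ord /= eq_sym.
rewrite (sum_pick L r (fun t => nth_mx S t c)).
by case: ifP => // h; rewrite nm_out // h.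
Qed.

Lemma QR_mul p q l (X : 'M[C]_(p, q)) (R : 'M[C]_q) (Y : 'M[C]_(q, l)) :
  (forall r c, nth_mx X r c = if (r < q)%N then nth_mx R r c else 0) ->
  forall r c, nth_mx (X *m Y) r c = if (r < q)%N then nth_mx (R *m Y) r c else 0.
Proof.
move=> H r c; rewrite nm_mul; under eq_bigr => t _ do rewrite H.
case: ifP => _; first by rewrite nm_mul.
by apply: big1 => t _; rewrite mul0r.
Qed.

Lemma QR_nm p q (X : 'M[C]_(p, q)) (R : 'M[C]_q) : (q <= p)%N ->
  (forall (r : 'I_p) (c : 'I_q), X r c = if (r < q)%N then nth_mx R r c else 0) ->
  forall r c, nth_mx X r c = if (r < q)%N then nth_mx R r c else 0.
Proof.
move=> hqp H r c.
case: (boolP ((r < p) && (c < q))%N) => [/andP[hr hc]|h].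
  by rewrite (nmP _ hr hc) H.
rewrite nm_out //; case: ifP => // hr; rewrite nm_out //.
case/nandP: h => h; last by rewrite (negbTE h) andbF.
by move: h; rewrite (leq_trans hr hqp).
Qed.

Definition unitary n (P : 'M[C]_n) := ctmx P *m P = 1%:M.

Lemma unitaryM n (A B : 'M[C]_n) : unitary A -> unitary B -> unitary (A *m B).
Proof.
rewrite /unitary => hA hB.
by rewrite ctmx_mul mulmxA -(mulmxA (ctmx B)) hA mulmx1.
Qed.

Lemma emb0_top p q l (P : 'M[C]_p) (X : 'M[C]_(q, l)) r c : (p <= q)%N -> (r < p)%N ->
  nth_mx (emb 0 q P *m X) r c = nth_mx (P *m lead_mx p l X) r c.
Proof.
move=> hpq hr; rewrite !nm_mul.
have hrq : (r < q)%N by apply: leq_trans hpq.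
transitivity (\sum_(t < q) (if (t < p)%N then nth_mx P r t * nth_mx X t c else 0)).
  apply: eq_bigr => t _; rewrite nm_emb hrq ltn_ord /= !subn0 !add0n hr /=.
  case: ifP => // ht; rewrite (_ : (r == t) = false) ?mul0r //.
  by apply/negbTE; apply: contraFN ht => /eqP <-.
rewrite (sum_trunc (fun t => nth_mx P r t * nth_mx X t c)) //.
by apply: eq_bigr => t _; rewrite nm_lead_row.
Qed.

Lemma emb0_bot p q l (P : 'M[C]_p) (X : 'M[C]_(q, l)) r c : (p <= r)%N ->
  nth_mx (emb 0 q P *m X) r c = nth_mx X r c.
Proof.
move=> hr; rewrite nm_mul.
case: (ltnP r q) => hrq; last first.
  by rewrite nm_out ?big1 // => [t _|]; rewrite ?nm_emb ltnNge hrq ?mul0r.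
rewrite (bigD1 (Ordinal hrq)) //= big1 ?addr0.
  by rewrite nm_emb hrq /= add0n ltnNge hr /= eqxx mul1r.
move=> t ht; rewrite nm_emb hrq ltn_ord /= add0n ltnNge hr /=.
rewrite (_ : (r == t) = false) ?mul0r //.
by apply/negbTE; apply: contra ht => /eqP e; apply/eqP; exact: val_inj.
Qed.

Lemma nm_dlsub L (O : 'M[C]_(L + L)) u a :
  nth_mx (dlsubmx O) u a = if ((u < L) && (a < L))%N then nth_mx O (L + u)%N a else 0.
Proof.
case: (boolP ((u < L) && (a < L))%N) => [/andP[hu ha]|h]; last by rewrite nm_out.
have h2 : (L + u < L + L)%N by rewrite ltn_add2l.
have h3 : (a < L + L)%N by apply: leq_trans ha (leq_addr _ _).
rewrite (nmP _ hu ha) !mxE (nmP _ h2 h3).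
have -> : rshift L (Ordinal hu) = Ordinal h2 by apply: val_inj.
by have -> : lshift L (Ordinal ha) = Ordinal h3 by apply: val_inj.
Qed.

Lemma ul_dl_unit L (O : 'M[C]_(L + L)) : unitary O ->
  ctmx (ulsubmx O) *m ulsubmx O + ctmx (dlsubmx O) *m dlsubmx O = 1%:M.
Proof.
rewrite /unitary => hO; apply/matrixP => a b.
have := congr1 (fun M : 'M[C]_(L + L) => M (lshift L a) (lshift L b)) hO.
move=> H; rewrite !mxE big_split_ord /= in H; rewrite !mxE -H.
by congr (_ + _); apply: eq_bigr => i _; rewrite /ctmx !mxE.
Qed.


Lemma Qm_emb L (Om : nat -> 'M[C]_(L + L)) m i : (1 <= i)%N ->
  Qm Om m i = emb (i.-1 * L) (m * L) (Om i).
Proof.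
case: i => // i _; apply: mx_nmP => r c hr hc.
rewrite nm_emb hr hc /= (nmP _ hr hc) mxE /=.
have e : (i.+2 * L = i * L + (L + L))%N by rewrite !mulSn; lia.
by rewrite e !andbA.
Qed.

Lemma Qm_unitary L (Om : nat -> 'M[C]_(L + L)) m i : (1 <= i)%N -> (i < m)%N ->
  unitary (Om i) -> unitary (Qm Om m i).
Proof.
move=> h1 h2 hU; rewrite Qm_emb //; apply: emb_unitary => //.
case: i h1 h2 {hU} => // i _ h2 /=.
have : (i.+2 * L <= m * L)%N by rewrite leq_mul2r h2 orbT.
by rewrite !mulSn; lia.
Qed.

Lemma foldr_mulE N (M : nat -> 'M[C]_N) (z : 'M[C]_N) s :
  foldr (fun i acc => acc *m M i) z s = z *m foldr (fun i acc => acc *m M i) 1%:M s.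
Proof. by elim: s => [|a s IH] /=; [rewrite mulmx1 | rewrite IH mulmxA]. Qed.

Lemma Qbar_unitary L (Om : nat -> 'M[C]_(L + L)) k :
  (forall i, (1 <= i <= k)%N -> unitary (Om i)) -> unitary (Qbar Om k).
Proof.
move=> hU; rewrite /Qbar.
have : all (fun i => 1 <= i <= k)%N (iota 1 k).
  by apply/allP => i; rewrite mem_iota => /andP[h1 h2]; apply/andP; split; lia.
elim: (iota 1 k) => [|a s IH] /=.
  by move=> _; rewrite /unitary ctmx1 mul1mx.
move=> /andP[/andP[ha1 ha2] hs]; apply: unitaryM; first exact: IH.
apply: Qm_unitary; [done | lia | by apply: hU; rewrite ha1 ha2].
Qed.

Lemma Qbar_split L (Om : nat -> 'M[C]_(L + L)) k :
  Qbar Om k.+1 = Qm Om k.+2 k.+1 *m emb 0 (k.+2 * L) (Qbar Om k).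
Proof.
rewrite /Qbar.
have -> : iota 1 k.+1 = iota 1 k ++ [:: k.+1] by rewrite -[k.+1]addn1 iotaD addnC.
rewrite foldr_cat /= mul1mx foldr_mulE; congr (_ *m _).
have : all (fun i => 1 <= i <= k)%N (iota 1 k).
  by apply/allP => i; rewrite mem_iota => /andP[h1 h2]; apply/andP; split; lia.
elim: (iota 1 k) => [|a s IH] /=; first by rewrite emb_1.
move=> /andP[/andP[ha1 ha2] hs]; rewrite IH // !Qm_emb //.
rewrite (@emb_nest (a.-1 * L) (k.+1 * L) (k.+2 * L)) ?emb_mul //.
- by rewrite !mulSn; lia.
- case: a ha1 ha2 {hs} => // a _ h2 /=.
  have : (a.+2 * L <= k.+1 * L)%N by rewrite leq_mul2r; apply/orP; right; lia.
  by rewrite !mulSn; lia.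
- by rewrite !mulSn; lia.
Qed.


Definition Psel L k : 'M[C]_(k.+1 * L, L) :=
  \matrix_(r < k.+1 * L, c < L) ((r : nat) == (k * L + c)%N)%:R.

Lemma nm_Psel L k r u : nth_mx (Psel L k) r u =
  if ((r < k.+1 * L) && (u < L))%N then (r == (k * L + u)%N)%:R else 0.
Proof.
case: (boolP ((r < k.+1 * L) && (u < L))%N) => [/andP[hr hu]|h]; last by rewrite nm_out.
by rewrite (nmP _ hr hu) mxE.
Qed.

Lemma nm_Psel_mul L k (X : 'M[C]_L) r c : nth_mx (Psel L k *m X) r c =
  if ((k * L <= r) && (r < k.+1 * L))%N then nth_mx X (r - k * L)%N c else 0.
Proof.
rewrite nm_mul; case: (ltnP r (k.+1 * L)) => hr; last first.
  by rewrite andbF big1 // => u _; rewrite nm_Psel ltnNge hr /= mul0r.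
rewrite andbT; under eq_bigr => u _ do rewrite nm_Psel hr ltn_ord /=.
case: (leqP (k * L) r) => hk.
  have hu : (r - k * L < L)%N by move: hr; rewrite mulSn; lia.
  transitivity (\sum_(u < L) (((u : nat) == (r - k * L)%N)%:R * nth_mx X u c)); last first.
    by rewrite (sum_pick L (r - k * L)%N (fun u => nth_mx X u c)) hu.
  apply: eq_bigr => u _.
  by have -> : (r == (k * L + u)%N) = ((u : nat) == (r - k * L)%N) by apply/eqP/eqP; lia.
apply: big1 => u _; rewrite (_ : (r == (k * L + u)%N) = false) ?mul0r //.
by apply/negbTE/eqP; lia.
Qed.


Lemma stepC L k (Om : nat -> 'M[C]_(L + L)) (Hbar : 'M[C]_(k.+2 * L, k.+1 * L))
    (S0 : 'M[C]_L) (Yj : 'M[C]_(k.+1 * L, L)) (Rj : 'M[C]_(k.+1 * L)) :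
  unitary (Qbar Om k) -> unitary (Om k.+1) ->
  (forall r c, nth_mx (Qbar Om k.+1 *m lead_mx (k.+2 * L) (k.+1 * L) Hbar) r c =
     if (r < k.+1 * L)%N then nth_mx Rj r c else 0) ->
  Rj \in unitmx ->
  (forall Y, frob (lead_mx (k.+2 * L) (k.+1 * L) Hbar *m Yj - Emx C L k.+2 *m S0)
        <= frob (lead_mx (k.+2 * L) (k.+1 * L) Hbar *m Y - Emx C L k.+2 *m S0)) ->
  forall Ct : 'M[C]_L,
  (forall a c, (a < L)%N -> nth_mx Ct a c =
      nth_mx (Qbar Om k *m Emx C L k.+1 *m S0) (k * L + a)%N c) ->
  Qbar Om k *m (lead_mx (k.+1 * L) (k.+1 * L) Hbar *m Yj) =
  Qbar Om k *m Emx C L k.+1 *m S0 -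
  Psel L k *m (ctmx (dlsubmx (Om k.+1)) *m (dlsubmx (Om k.+1) *m Ct)).
Proof.
move=> hQ' hO hQR hR hmin Ct hCt.
set g := Qbar Om k *m Emx C L k.+1 *m S0.
set O := Om k.+1.
have hJm : (k.+2 * L = k.+1 * L + L)%N by rewrite [in LHS]mulSn addnC.
have hJm' : (k.+1 * L = k * L + L)%N by rewrite [in LHS]mulSn addnC.
pose Qm1 := Qm Om k.+2 k.+1.
pose E := emb 0 (k.+2 * L) (Qbar Om k).
have hsplit : Qbar Om k.+1 = Qm1 *m E by rewrite Qbar_split.
have hQm : unitary Qm1 by apply: Qm_unitary.
have hE : unitary E by apply: emb_unitary => //; rewrite add0n hJm leq_addr.
have hQ : unitary (Qbar Om k.+1) by rewrite hsplit; apply: unitaryM.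
set HH := lead_mx (k.+2 * L) (k.+1 * L) Hbar.
set b := Emx C L k.+2 *m S0.
have GM := ls_top (_ : k.+1 * L <= k.+2 * L)%N hQ hQR hR hmin.
pose Z := Qbar Om k.+1 *m (HH *m Yj - b).
have Ztop : forall r c, (r < k.+1 * L)%N -> nth_mx Z r c = 0.
  move=> r c hr; rewrite /Z mulmxBr mulmxA nm_sub (QR_mul _ hQR) hr GM ?subrr //.
  by rewrite hJm leq_addr.
have Zbot : forall r c, (k.+1 * L <= r)%N -> nth_mx Z r c = - nth_mx (Qbar Om k.+1 *m b) r c.
  move=> r c hr; rewrite /Z mulmxBr mulmxA nm_sub (QR_mul _ hQR) ltnNge hr /=.
  by rewrite sub0r.
have EZ : E *m (HH *m Yj - b) = ctmx Qm1 *m Z.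
  by rewrite /Z hsplit !mulmxA hQm mul1mx.
have leadb : lead_mx (k.+1 * L) L b = Emx C L k.+1 *m S0.
  by rewrite /b !EmxS lead_lead // hJm leq_addr.
have leadX : lead_mx (k.+1 * L) L (HH *m Yj - b) =
             lead_mx (k.+1 * L) (k.+1 * L) Hbar *m Yj - Emx C L k.+1 *m S0.
  by rewrite lead_sub lead_mulr /HH lead_lead ?leadb // hJm leq_addr.
have top : forall r c, (r < k.+1 * L)%N ->
    nth_mx (Qbar Om k *m (lead_mx (k.+1 * L) (k.+1 * L) Hbar *m Yj)) r c - nth_mx g r c =
    nth_mx (ctmx Qm1 *m Z) r c.
  move=> r c hr; rewrite -EZ emb0_top //; last by rewrite hJm leq_addr.
  by rewrite leadX mulmxBr nm_sub /g -mulmxA.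
have hQm1 : Qm1 = emb (k * L) (k.+2 * L) O by rewrite /Qm1 Qm_emb.
have nmQm : forall u t, (u < L)%N -> (t < k.+2 * L)%N ->
    nth_mx Qm1 (k.+1 * L + u)%N t =
    if (k * L <= t)%N then nth_mx O (L + u)%N (t - k * L)%N else 0.
  move=> u t hu ht; rewrite hQm1 nm_emb ht /=.
  have -> : (k.+1 * L + u < k.+2 * L)%N by rewrite hJm ltn_add2l.
  have -> : (k * L <= k.+1 * L + u < k * L + (L + L))%N by rewrite hJm'; lia.
  have -> : (k.+1 * L + u - k * L = L + u)%N by rewrite hJm'; lia.
  case: (leqP (k * L) t) => htk /=.
    have -> : (t < k * L + (L + L))%N by move: ht; rewrite hJm hJm'; lia.
    done.
  by rewrite (_ : (k.+1 * L + u == t) = false) //; apply/negbTE/eqP; have := hJm'; lia.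
have Qbb : forall u c, (u < L)%N -> nth_mx (Qbar Om k.+1 *m b) (k.+1 * L + u)%N c =
    \sum_(a < L) nth_mx O (L + u)%N a * nth_mx Ct a c.
  move=> u c hu; rewrite hsplit -mulmxA nm_mul.
  transitivity (\sum_(t < k.+2 * L) (if (k * L <= t < k * L + L)%N then
     nth_mx O (L + u)%N (t - k * L)%N * nth_mx g t c else 0)).
    apply: eq_bigr => t _; rewrite nmQm //.
    case: (ltnP t (k.+1 * L)) => htJ.
      rewrite emb0_top // ?leadb; last by rewrite hJm leq_addr.
      rewrite -hJm' htJ andbT /g -mulmxA.
      by case: ifP => //; rewrite mul0r.
    rewrite emb0_bot // /b EmxS nm_lead.
    rewrite (nm_out S0) ?if_same; last by apply/nandP; left; rewrite -leqNgt; move: htJ; rewrite hJm'; lia.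
    rewrite mulr0 (_ : (t < k * L + L)%N = false) ?andbF //.
    by apply/negbTE; rewrite -leqNgt -hJm'.
  rewrite (sum_block (fun t => nth_mx O (L + u)%N (t - k * L)%N * nth_mx g t c)); last first.
    by rewrite hJm hJm' leq_addr.
  by apply: eq_bigr => a _; rewrite addKn hCt.
have CZ : forall r c, (r < k.+1 * L)%N -> nth_mx (ctmx Qm1 *m Z) r c =
    if (k * L <= r)%N then - \sum_(u < L) (nth_mx O (L + u)%N (r - k * L)%N)^* *
      \sum_(a < L) nth_mx O (L + u)%N a * nth_mx Ct a c else 0.
  move=> r c hr; rewrite nm_mul.
  have hrm : (r < k.+2 * L)%N by rewrite hJm ltn_addr.
  transitivity (\sum_(t < k.+2 * L) (if (k.+1 * L <= t < k.+1 * L + L)%N then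
     (nth_mx Qm1 t r)^* * nth_mx Z t c else 0)).
    apply: eq_bigr => t _; rewrite nm_ct; case: ifP => // hn.
    have ht : (t < k.+1 * L)%N.
      case: (ltnP t (k.+1 * L)) => // h; move: hn; rewrite h /=.
      have h2 := ltn_ord t.
      have h3 : (t < k.+1 * L + L)%N by rewrite -hJm.
      by rewrite h3.
    by rewrite Ztop // mulr0.
  rewrite (sum_block (fun t => (nth_mx Qm1 t r)^* * nth_mx Z t c)) -?hJm //.
  under eq_bigr => u _ do rewrite nmQm // Zbot ?leq_addr // Qbb //.
  case: ifP => _; last by apply: big1 => u _; rewrite conjC0 mul0r.
  by rewrite -sumrN; apply: eq_bigr => u _; rewrite mulrN.
apply: mx_nmP => r c hr hc.
have := top r c hr; rewrite CZ // => /eqP; rewrite subr_eq => /eqP ->.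
rewrite nm_sub nm_Psel_mul hr andbT.
case: ifP => hk; last by rewrite subr0 add0r.
rewrite addrC; congr (_ - _).
rewrite nm_mul; apply: eq_bigr => u _.
rewrite nm_ct nm_dlsub ltn_ord /= (_ : (r - k * L < L)%N); last by move: hr; rewrite hJm'; lia.
by rewrite nm_mul; congr (_ * _); apply: eq_bigr => a _; rewrite nm_dlsub !ltn_ord.
Qed.


Lemma addid (V : zmodType) (a b x y : V) : a - (b - y) = x + (a - b - (x - y)).
Proof. rewrite opprB addrA [RHS]addrC -!addrA; congr (_ + _); by rewrite opprB subrK addrC. Qed.

End Help.

Theorem mainTheorem8 (C : numClosedFieldType) (n L j : nat)
  (A : 'M[C]_n) (B X0 : 'M[C]_(n, L))
  (W : 'M[C]_(n, j.+1 * L)) (S0 : 'M[C]_L)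
  (Hbar : 'M[C]_(j.+1 * L, j * L))
  (Omega : nat -> 'M[C]_(L + L))
  (U1 U2 V : 'M[C]_L) (c s : 'rV[C]_L)
  (Yj : 'M[C]_(j * L, L)) (Yjm1 : 'M[C]_(j.-1 * L, L)) :
  (1 <= n)%N -> (1 <= L)%N -> (2 <= j)%N ->
  (* Arnoldi basis: W = [V_1, ..., V_{j+1}] with orthonormal columns, F0 = V1 S0 *)
  orthonormal_cols W ->
  B - A *m X0 = lead_mx n L W *m S0 ->
  upper_tri S0 ->
  (* block Arnoldi relation A W_j = W_{j+1} Hbar_j *)
  A *m lead_mx n (j * L) W = W *m Hbar ->
  (* Hbar_j block upper Hessenberg with upper triangular subdiagonal blocks *)
  (forall i k, (1 <= k)%N -> (k.+1 < i)%N -> blk L Hbar i k = 0) ->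
  (forall k, (1 <= k <= j)%N -> upper_tri (blk L Hbar k.+1 k)) ->
  (* Hbar_j has full column rank *)
  \rank Hbar = (j * L)%N ->
  (* block QR factorization *)
  (forall i, (1 <= i <= j)%N -> orthonormal_cols (Omega i)) ->
  (forall k, (1 <= k <= j)%N ->
     exists R : 'M[C]_(k * L),
       [/\ upper_tri R, R \in unitmx &
        forall (r : 'I_(k.+1 * L)) (q : 'I_(k * L)),
          (Qbar Omega k *m lead_mx (k.+1 * L) (k * L) Hbar) r q =
          if (r < k * L)%N then nth_mx R r q else 0]) ->
  (* H_j nonsingular *)
  lead_mx (j * L) (j * L) Hbar \in unitmx ->
  (* Yj, Yjm1 : the block GMRES least-squares minimizers at steps j and j-1 *)
  (forall Y : 'M[C]_(j * L, L),
     frob (lead_mx (j.+1 * L) (j * L) Hbar *m Yj - Emx C L j.+1 *m S0)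
     <= frob (lead_mx (j.+1 * L) (j * L) Hbar *m Y - Emx C L j.+1 *m S0)) ->
  (forall Y : 'M[C]_(j.-1 * L, L),
     frob (lead_mx (j.-1.+1 * L) (j.-1 * L) Hbar *m Yjm1 - Emx C L j.-1.+1 *m S0)
     <= frob (lead_mx (j.-1.+1 * L) (j.-1 * L) Hbar *m Y - Emx C L j.-1.+1 *m S0)) ->
  (* F_{j-1}^{(G)} has rank L *)
  \rank (B - A *m (X0 + lead_mx n (j.-1 * L) W *m Yjm1)) = L ->
  (* CS decomposition of the first block column of Omega_j *)
  orthonormal_cols U1 -> orthonormal_cols U2 -> orthonormal_cols V ->
  (forall i, 0 <= c 0 i) -> (forall i, 0 <= s 0 i) ->
  (forall i, c 0 i ^+ 2 + s 0 i ^+ 2 = 1) ->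
  ulsubmx (Omega j) = U1 *m diag_mx c *m ctmx V ->
  dlsubmx (Omega j) = U2 *m diag_mx s *m ctmx V ->
  let Ct : 'M[C]_L :=
    \matrix_(a < L, b < L)
      nth_mx (Qbar Omega j.-1 *m Emx C L j.-1.+1 *m S0) (j.-1 * L + a) b in
  let XG_j := X0 + lead_mx n (j * L) W *m Yj in
  let XG_jm1 := X0 + lead_mx n (j.-1 * L) W *m Yjm1 in
  let XF_j := X0 + lead_mx n (j * L) W *m
                   (invmx (lead_mx (j * L) (j * L) Hbar) *m Emx C L j *m S0) in
  let M1 := invmx Ct *m V *m (diag_mx c *m diag_mx c) *m ctmx V *m Ct in
  let M2 := invmx Ct *m V *m (diag_mx s *m diag_mx s) *m ctmx V *m Ct in
  [/\ XG_j = XF_j *m M1 + XG_jm1 *m M2,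
      M1 + M2 = 1%:M &
      M1 = invmx Ct *m ctmx (ulsubmx (Omega j)) *m ulsubmx (Omega j) *m Ct].
Proof.
move: W Hbar Yj Yjm1; case: j => [|k] W Hbar Yj Yjm1 hn hL hj; first by [].
move=> hW hB hS0 hArn hHess hHtri hrank hOm hQR hHj hYj hYjm1 hrankF.
move=> hU1 hU2 hV hc hs hcs hQ11 hQ21 Ct XG_j XG_jm1 XF_j M1 M2.
have hk : (1 <= k)%N by [].
have hJm : (k.+2 * L = k.+1 * L + L)%N by rewrite [in LHS]mulSn addnC.
have hJm' : (k.+1 * L = k * L + L)%N by rewrite [in LHS]mulSn addnC.
have hQ' : unitary (Qbar Omega k).
  by apply: Qbar_unitary => i /andP[h1 h2]; apply: hOm; rewrite h1 /= ltnW.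
have hO : unitary (Omega k.+1) by apply: hOm; rewrite /= leqnn.
have hk1 : (1 <= k <= k.+1)%N by rewrite hk leqW.
have [Rk [_ hRk hQRk]] := hQR k hk1.
have hk2 : (1 <= k.+1 <= k.+1)%N by rewrite leqnn.
have [Rj [_ hRj hQRj]] := hQR k.+1 hk2.
have l1 : (k * L <= k.+1 * L)%N by rewrite hJm' leq_addr.
have l2 : (k.+1 * L <= k.+2 * L)%N by rewrite hJm leq_addr.
have hQRk' := QR_nm l1 hQRk.
have hQRj' := QR_nm l2 hQRj.
set g := Qbar Omega k *m Emx C L k.+1 *m S0.
have hCt : forall a b, (a < L)%N -> nth_mx Ct a b = nth_mx g (k * L + a)%N b.
  move=> a b ha; case: (ltnP b L) => hc'.
    by rewrite (nmP _ ha hc') mxE.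
  by rewrite !nm_out // ?hc' ?andbF //; apply/nandP; right; rewrite -leqNgt.
have GMk := ls_top l1 hQ' hQRk' hRk hYjm1.
have stepB : Qbar Omega k *m (lead_mx (k.+1 * L) (k * L) Hbar *m Yjm1) = g - Psel C L k *m Ct.
  apply: mx_nmP => r b hr hb.
  rewrite mulmxA (QR_mul _ hQRk') nm_sub nm_Psel_mul hr andbT.
  case: (ltnP r (k * L)) => hrk.
    by rewrite GMk // /g mulmxA subr0.
  by rewrite hCt; [rewrite subnKC // subrr | move: hr; rewrite hJm'; lia].
have stepC0 := stepC hQ' hO hQRj' hRj hYj hCt.
have hHz : forall t b, (k.+1 * L <= t)%N -> (b < k * L)%N -> nth_mx Hbar t b = 0.
  move=> t b ht hb.
  case: (ltnP t (k.+2 * L)) => htm; last first.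
    by rewrite nm_out //; apply/nandP; left; rewrite -leqNgt.
  have ha : (t - k.+1 * L < L)%N by move: htm; rewrite hJm; lia.
  have hb' : (b %% L < L)%N by rewrite ltn_pmod.
  have hlt : ((b %/ L).+2 < k.+2)%N by rewrite !ltnS ltn_divLR.
  have := congr1 (fun M : 'M[C]_L => M (Ordinal ha) (Ordinal hb')) (hHess k.+2 (b %/ L).+1 isT hlt).
  rewrite !mxE /= => e.
  have -> : t = (k.+1 * L + (t - k.+1 * L))%N by rewrite subnKC.
  have -> : b = (b %/ L * L + b %% L)%N by rewrite -divn_eq.
  exact: e.
have hWp : A *m lead_mx n (k * L) W =
           lead_mx n (k.+1 * L) W *m lead_mx (k.+1 * L) (k * L) Hbar.
  have e1 : lead_mx n (k * L) W = lead_mx n (k.+1 * L) W *m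
            lead_mx (k.+1 * L) (k * L) (1%:M : 'M[C]_(k * L)).
    by rewrite pad_mul // lead_lead // mulmx1.
  rewrite e1 mulmxA hArn -mulmxA pad_mul // mulmx1.
  apply: mx_nmP => r b hr hb; rewrite !nm_mul.
  transitivity (\sum_(t < k.+2 * L)
     (if (t < k.+1 * L)%N then nth_mx W r t * nth_mx Hbar t b else 0)).
    apply: eq_bigr => t _; rewrite nm_lead ltn_ord hb /=.
    case: ifP => // /negbT; rewrite -leqNgt => ht.
    by rewrite hHz // mulr0.
  rewrite (sum_trunc (fun t => nth_mx W r t * nth_mx Hbar t b)) //.
  by apply: eq_bigr => t _; rewrite !nm_lead hr hb !ltn_ord.
have e3 : Qbar Omega k *m (Emx C L k.+1 *m S0 - lead_mx (k.+1 * L) (k * L) Hbar *m Yjm1)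
          = Psel C L k *m Ct.
  by rewrite mulmxBr stepB /g mulmxA opprB addrC subrK.
have e2 : Emx C L k.+1 *m S0 - lead_mx (k.+1 * L) (k * L) Hbar *m Yjm1 =
          ctmx (Qbar Omega k) *m (Psel C L k *m Ct).
  by rewrite -e3 mulmxA hQ' mul1mx.
have hF : B - A *m (X0 + lead_mx n (k * L) W *m Yjm1) =
          lead_mx n (k.+1 * L) W *m (ctmx (Qbar Omega k) *m (Psel C L k *m Ct)).
  rewrite mulmxDr opprD addrA hB mulmxA hWp -e2 mulmxBr -mulmxA.
  by rewrite EmxS pad_mul ?lead_lead // hJm' leq_addl.
have hCtu : Ct \in unitmx.
  have hr2 : \rank (B - A *m (X0 + lead_mx n (k * L) W *m Yjm1)) = L := hrankF.
  rewrite hF in hr2.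
  rewrite -row_free_unit /row_free eqn_leq rank_leq_row /=.
  rewrite -{1}hr2; apply: leq_trans (mxrankM_maxr _ _) _.
  apply: leq_trans (mxrankM_maxr _ _) _; exact: mxrankM_maxr.
have hV' : V *m ctmx V = 1%:M by apply: mulmx1C.
have hDc : ctmx (diag_mx c) = diag_mx c.
  apply/matrixP => a b; rewrite !mxE eq_sym.
  case: eqP => [->|_]; last by rewrite !mulr0n conjC0.
  by rewrite !mulr1n; apply: geC0_conj.
have hQQ : ctmx (ulsubmx (Omega k.+1)) *m ulsubmx (Omega k.+1) =
           V *m (diag_mx c *m diag_mx c) *m ctmx V.
  rewrite hQ11 !ctmx_mul ctmxK hDc !mulmxA -(mulmxA _ (ctmx U1)) hU1 mulmx1.
  by [].
have h3 : M1 = invmx Ct *m (ctmx (ulsubmx (Omega k.+1)) *m ulsubmx (Omega k.+1)) *m Ct.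
  by rewrite hQQ /M1 !mulmxA.
have hd : diag_mx c *m diag_mx c + diag_mx s *m diag_mx s = 1%:M.
  rewrite !mul_diag_mx; apply/matrixP => a b; rewrite !mxE.
  case: eqP => _; first by rewrite !mulr1n -!expr2 hcs.
  by rewrite !mulr0n !mulr0 addr0.
have hM12 : M1 + M2 = 1%:M.
  rewrite /M1 /M2 -mulmxDl -mulmxDl -mulmxDr hd mulmx1.
  by rewrite -(mulmxA (invmx Ct)) hV' mulmx1 mulVmx.
set Hj := lead_mx (k.+1 * L) (k.+1 * L) Hbar.
set K := Qbar Omega k *m Hj.
have Kc : forall X Y : 'M[C]_(k.+1 * L, L), K *m X = K *m Y -> X = Y.
  move=> X Y /(congr1 (mulmx (invmx Hj *m ctmx (Qbar Omega k)))).
  rewrite /K !mulmxA -(mulmxA (invmx Hj)) hQ' mulmx1 mulVmx //.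
  by rewrite !mul1mx.
have hu := ul_dl_unit hO.
have hu' : ctmx (dlsubmx (Omega k.+1)) *m dlsubmx (Omega k.+1) =
           1%:M - ctmx (ulsubmx (Omega k.+1)) *m ulsubmx (Omega k.+1).
  by rewrite -hu addrAC subrr add0r.
have hCM1 : Ct *m M1 = ctmx (ulsubmx (Omega k.+1)) *m ulsubmx (Omega k.+1) *m Ct.
  by rewrite h3 !mulmxA mulmxV // mul1mx.
have hN : ctmx (dlsubmx (Omega k.+1)) *m (dlsubmx (Omega k.+1) *m Ct) = Ct - Ct *m M1.
  by rewrite mulmxA hu' mulmxBl mul1mx hCM1.
have hKYj : K *m Yj = g - Psel C L k *m (Ct - Ct *m M1).
  by rewrite /K -mulmxA stepC0 hN.
have hKeY : K *m lead_mx (k.+1 * L) L Yjm1 = g - Psel C L k *m Ct.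
  by rewrite /K -mulmxA pad_mul // /Hj lead_lead // stepB.
have hKYF : K *m (invmx Hj *m Emx C L k.+1 *m S0) = g.
  by rewrite /K -!mulmxA mulKVmx // /g !mulmxA.
have hM2 : M2 = 1%:M - M1 by rewrite -hM12 addrC addKr.
have hY : Yj = (invmx Hj *m Emx C L k.+1 *m S0) *m M1 + lead_mx (k.+1 * L) L Yjm1 *m M2.
  apply: Kc; rewrite mulmxDr (mulmxA K) hKeY (mulmxA K) hKYF hKYj hM2.
  rewrite mulmxBr mulmxA mulmxBr mulmx1 mulmxBl.
  exact: addid.
have hWY : lead_mx n (k.+1.-1 * L) W *m Yjm1 =
           lead_mx n (k.+1 * L) W *m lead_mx (k.+1 * L) L Yjm1.
  by rewrite pad_mul // lead_lead.
split => //; last by rewrite h3 !mulmxA.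
rewrite /XG_j /XF_j /XG_jm1 hY hWY -{1}(mulmx1 X0) -hM12 !mulmxDr !mulmxDl !mulmxA.
by rewrite addrACA.
Qed.
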